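(* Let $G=(V,E)$ with $|V|\ge 3$, $N\ge3$, $\varepsilon\in(0,\frac1{N-1}]$ and $s_0\in S_{nc}$. Then for every $\gamma\in(0,1)$, every trigger strategies profile $\bar\sigma$ of $\Gamma_N(G|s_0,\gamma,\varepsilon)$ is nonpositional.
   Context: Setting. $G=(V,E)$ is a finite, simple, connected, undirected graph; $N\ge 3$ is an integer; $\gamma\in(0,1)$ and $\varepsilon\in[0,\frac1{N-1}]$ are parameters. There are $N$ tokens: cops $C_1,\dots,C_{N-1}$ (tokens $1,\dots,N-1$) and the robber $R$ (token $N$). A state is $s=(x^1,\dots,x^N,n)$ where $x^i\in V$ is the position of token $i$ and $n\in\{1,\dots,N\}$ is the token that moves next; $S^n$ denotes the set of states with token $n$ to move. A state is a capture state if $x^i=x^N$ for some $i\le N-1$; $S_{nc}$ is the set of noncapture states. In each turn exactly one token, the one to move, moves to a vertex of its closed neighbourhood (it may stay put); the order of moves is $C_1,C_2,\dots,C_{N-1},R,C_1,\dots$. Starting from an initial state $s_0\in S_{nc}$ at time $0$, the capture time is the first time $t$ at which a capture state occurs (infinite if never); after capture the game is over. Auxiliary games. For $m\in\{1,\dots,N\}$, $\Gamma_N^m(G|s_0,\gamma,\varepsilon)$ is the two-player zero-sum game in which player $P_m$ controls token $m$ and player $P_{-m}$ controls all other tokens, with the following payoff to $P_m$ ($P_{-m}$ receives its negative): $0$ if no capture ever occurs; if capture occurs at time $t$: for $m=N$, $-\gamma^t$; for $m\le N-1$, $\frac{1-\varepsilon}{K}\gamma^t$ if exactly $K\in\{1,\dots,N-2\}$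 cops, including $C_m$, are on the robber's vertex, $\frac{\varepsilon}{N-K-1}\gamma^t$ if exactly $K\in\{1,\dots,N-2\}$ cops, not including $C_m$, are on the robber's vertex, and $\frac{\gamma^t}{N-1}$ if all $N-1$ cops are on the robber's vertex. $\Gamma^N_N$ is the modified cops-and-robber (CR) game. A pure positional strategy for token $n$ maps each state in $S^n\cap S_{nc}$ to an allowed next vertex. Each $\Gamma^m_N$ has optimal pure positional strategies (optimal from every initial state). For $m,n\in\{1,\dots,N\}$, $\phi^n_m$ denotes the strategy of token $n$ in a chosen pair of optimal pure positional strategies of $\Gamma^m_N$ (so $\phi^m_m$ is $P_m$'s optimal strategy and $(\phi^n_m)_{n\ne m}$ is $P_{-m}$'s). $\widehat\Sigma^n$ is the set of pure positional strategies of token $n$ that are components of optimal strategy pairs of $\Gamma^N_N$ (CR-optimal strategies). Trigger strategies. Given a choice of $(\phi^n_m)_{n,m}$, the trigger strategies profile $\bar\sigma=(\bar\sigma^1,\dots,\bar\sigma^N)$ of the $N$-player SCAR game $\Gamma_N(G|s_0,\gamma,\varepsilon)$ (same board and moves; player $n$ controls token $n$) is: token $n$, at current state $s$, plays $\phi^n_n(s)$ as long as every other player $m$ has followed $\phi^m_m$, and plays $\phi^n_m(s)$ from the moment a player $m\neq n$ deviates from $\phi^m_m$. Different choices of the optimal strategies give different trigger strategies profiles. $\bar\sigma$ is called positional if for all $n,m\in\{1,\dots,N\}$ there is $\widehat\sigma^n\in\widehat\Sigma^n$ with $\phi^n_m(s)=\widehat\sigma^n(s)$ for every state $s\in S^n\cap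 S_{nc}$ reachable from $s_0$ by a finite sequence of legal moves passing only through noncapture states; otherwise $\bar\sigma$ is nonpositional. *)

(* Defs.v *)
From Stdlib Require Import Reals ClassicalEpsilon.
From mathcomp Require Import all_boot.

Set Implicit Arguments.
Unset Strict Implicit.
Unset Printing Implicit Defensive.

Section SCAR.

Variable V : finType.
Variable e : rel V.
(* Number of tokens; tokens are 'I_N, token N-1 (0-based) is the robber,
   tokens 0..N-2 are the cops C_1..C_{N-1}. *)
Variable N : nat.

Definition is_rob (i : 'I_N) : bool := val i == N.-1.

Definition State : finType := ({ffun 'I_N -> V} * 'I_N)%type.
Definition pos (s : State) (i : 'I_N) : V := s.1 i.
Definition mover (s : State) : 'I_N := s.2.

Definition allowed (x y : V) : bool := (x == y) || e x y.

Definition capture (s : State) : bool :=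
  [exists i, [exists j, [&& ~~ is_rob i, is_rob j & pos s i == pos s j]]].
Definition noncap (s : State) : bool := ~~ capture s.

Definition step (s : State) (v : V) : State :=
  ([ffun i => if i == mover s then v else pos s i], ordS (mover s)).

Definition nc_move : rel State :=
  fun s s' => noncap s && [exists v, allowed (pos s (mover s)) v && (s' == step s v)].

Definition reachable (s0 s : State) : bool := connect nc_move s0 s.

(* General (history-dependent) pure strategies: given the past history and the
   current state, the chosen vertex. *)
Definition hstrat := seq State -> State -> V.
Definition legal_h (n : 'I_N) (sg : hstrat) : Prop :=
  forall h s, mover s = n -> noncap s -> allowed (pos s n) (sg h s).

(* Pure positional strategies (only their values on S^n ∩ S_nc matter). *)
Definition pstrat := State -> V.
Definition legal_p (n : 'I_N) (sg : pstrat) : Prop :=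
  forall s, mover s = n -> noncap s -> allowed (pos s n) (sg s).
Definition of_pos (sg : pstrat) : hstrat := fun _ s => sg s.

(* The play generated by a profile P from s0: (history before time t, state at t). *)
Fixpoint play (P : 'I_N -> hstrat) (s0 : State) (t : nat) : seq State * State :=
  match t with
  | 0 => ([::], s0)
  | t'.+1 => let hs := play P s0 t' in
             (rcons hs.1 hs.2, step hs.2 (P (mover hs.2) hs.1 hs.2))
  end.
Definition state_at P s0 t : State := (play P s0 t).2.

Definition payoff (w : State -> R) (gamma : R) (P : 'I_N -> hstrat) (s0 : State) : R :=
  match excluded_middle_informative (exists t, capture (state_at P s0 t)) with
  | left ex => Rmult (pow gamma (@ex_minn (fun t => capture (state_at P s0 t)) ex))
                (w (state_at P s0 (@ex_minn (fun t => capture (state_at P s0 t)) ex)))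
  | right _ => R0
  end.

Definition ncops_on_rob (s : State) : nat :=
  #|[set i : 'I_N | ~~ is_rob i && [exists j, is_rob j && (pos s i == pos s j)]]|.

Definition weight (eps : R) (m : 'I_N) (s : State) : R :=
  if is_rob m then Ropp R1
  else let K := ncops_on_rob s in
       if K == N.-1 then Rinv (INR N.-1)
       else if [exists j, is_rob j && (pos s m == pos s j)]
            then Rdiv (Rminus R1 eps) (INR K)
            else Rdiv eps (INR (N - K - 1)).

Definition upd (P : 'I_N -> hstrat) (m : 'I_N) (sg : hstrat) : 'I_N -> hstrat :=
  fun n => if n == m then sg else P n.

(* phi : 'I_N -> pstrat is a pair of optimal pure positional strategies of Γ^m_N,
   optimal (saddle point) from every initial noncapture state, against all
   pure strategies of the deviating player. *)
Definition optimal (gamma eps : R) (m : 'I_N) (phi : 'I_N -> pstrat) : Prop :=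
  (forall n, legal_p n (phi n)) /\
  forall s, noncap s ->
    (forall sg, legal_h m sg ->
       Rle (payoff (weight eps m) gamma (upd (fun n => of_pos (phi n)) m sg) s)
           (payoff (weight eps m) gamma (fun n => of_pos (phi n)) s)) /\
    (forall tau : 'I_N -> hstrat, (forall n, n != m -> legal_h n (tau n)) ->
       Rle (payoff (weight eps m) gamma (fun n => of_pos (phi n)) s)
           (payoff (weight eps m) gamma (upd tau m (of_pos (phi m))) s)).

(* CR-optimal strategies of token n: components of optimal pairs of Γ^N_N. *)
Definition CR_optimal (gamma eps : R) (n : 'I_N) (sg : pstrat) : Prop :=
  exists r : 'I_N, is_rob r /\
  exists psi : 'I_N -> pstrat, optimal gamma eps r psi /\ psi n = sg.

(* A choice of optimal strategies: phi m n = φ^n_m. *)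
Definition trigger_choice (gamma eps : R) (phi : 'I_N -> 'I_N -> pstrat) : Prop :=
  forall m, optimal gamma eps m (phi m).

(* The trigger strategies profile determined by phi (for reference): token n
   plays φ^n_n until the first deviation by some player m ≠ n, then φ^n_m. *)
Definition trigger_profile (phi : 'I_N -> 'I_N -> pstrat) : 'I_N -> hstrat :=
  fun n h s =>
    let hs := rcons h s in
    let dev := [seq (mover (nth s hs k), k) | k <- iota 0 (size h)
                 & (mover (nth s hs k) != n) &&
                   (nth s hs k.+1 != step (nth s hs k)
                        (phi (mover (nth s hs k)) (mover (nth s hs k)) (nth s hs k)))] in
    match dev with
    | [::] => phi n n s
    | (m, _) :: _ => phi m n s
    end.

Definition positional (gamma eps : R) (s0 : State) (phi : 'I_N -> 'I_N -> pstrat) : Prop :=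
  forall n m : 'I_N, exists sh : pstrat, CR_optimal gamma eps n sh /\
    forall s, mover s = n -> noncap s -> reachable s0 s -> phi m n s = sh s.

Definition nonpositional gamma eps s0 phi : Prop := ~ positional gamma eps s0 phi.

End SCAR.

(* Main.v *)
Require Import Defs.
From Stdlib Require Import Reals Lra ClassicalEpsilon.
From mathcomp Require Import all_boot.
Set Implicit Arguments.
Unset Strict Implicit.
Local Notation pos := Defs.pos.


Lemma r0_lt (N : nat) (hN : 2 < N) : N.-1 < N.
Proof. by rewrite ltn_predL; apply: leq_trans hN. Qed.

Definition r0 (N : nat) (hN : 2 < N) : 'I_N := Ordinal (r0_lt hN).

Lemma is_robE (N : nat) (hN : 2 < N) (j : 'I_N) : is_rob j = (j == r0 hN).
Proof. by []. Qed.

Lemma captureE (V : finType) N (hN : 2 < N) (s : State V N) :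
  capture s = [exists i, ~~ is_rob i && (pos s i == pos s (r0 hN))].
Proof.
apply/existsP/existsP => [[i /existsP [j /and3P [Hi Hj Hij]]]|[i /andP [Hi Hij]]].
  exists i; rewrite Hi /=; move: Hj; rewrite is_robE => /eqP <-; exact Hij.
exists i; apply/existsP; exists (r0 hN); by rewrite Hi Hij is_robE eqxx.
Qed.

Lemma noncapP (V : finType) N (hN : 2 < N) (s : State V N) :
  noncap s -> forall i, ~~ is_rob i -> pos s i <> pos s (r0 hN).
Proof.
rewrite /noncap captureE negb_exists => /forallP H i Hi Heq.
by move: (H i); rewrite Hi Heq eqxx.
Qed.

Lemma noncapI (V : finType) N (hN : 2 < N) (s : State V N) :
  (forall i, ~~ is_rob i -> pos s i <> pos s (r0 hN)) -> noncap s.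
Proof.
move=> H; rewrite /noncap captureE negb_exists; apply/forallP => i.
case Hi: (is_rob i) => //=; apply/eqP; exact: H (negbT Hi).
Qed.

Lemma capI (V : finType) N (hN : 2 < N) (s : State V N) i :
  ~~ is_rob i -> pos s i = pos s (r0 hN) -> capture s.
Proof. move=> Hi Heq; rewrite captureE; apply/existsP; exists i; by rewrite Hi Heq eqxx. Qed.

Lemma payoff_at (V : finType) N (w : State V N -> R) gamma P s k :
  capture (state_at P s k) -> (forall t, t < k -> ~~ capture (state_at P s t)) ->
  payoff w gamma P s = Rmult (pow gamma k) (w (state_at P s k)).
Proof.
move=> Hk Hlt; rewrite /payoff.
case: excluded_middle_informative => [ex|nex]; last by exfalso; apply: nex; exists k.
case: ex_minnP => t Ht Hmin.
have -> : t = k; last by [].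
apply/eqP; rewrite eqn_leq (Hmin _ Hk) /= leqNgt; apply/negP => /Hlt; by rewrite Ht.
Qed.

Lemma pos_step (V : finType) N (s : State V N) v i :
  pos (step s v) i = if i == mover s then v else pos s i.
Proof. by rewrite /pos /step /= ffunE. Qed.

Lemma mover_step (V : finType) N (s : State V N) v : mover (step s v) = ordS (mover s).
Proof. by []. Qed.

Lemma state_at0 (V : finType) N (P : 'I_N -> hstrat V N) s : state_at P s 0 = s.
Proof. by []. Qed.

Lemma state_at1 (V : finType) N (P : 'I_N -> hstrat V N) s :
  state_at P s 1 = step s (P (mover s) [::] s).
Proof. by []. Qed.

Lemma state_atS (V : finType) N (P : 'I_N -> hstrat V N) s t :
  state_at P s t.+1 = step (state_at P s t) (P (mover (state_at P s t)) (play P s t).1 (state_at P s t)).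
Proof. by []. Qed.

Lemma weight_rob (V : finType) N eps (r : 'I_N) (s : State V N) :
  is_rob r -> weight eps r s = Ropp R1.
Proof. by rewrite /weight => ->. Qed.

Lemma cr_capture (V : finType) (e : rel V) N (hN : 2 < N) gamma eps
  (hg : Rlt R0 gamma /\ Rlt gamma R1) (psi : 'I_N -> pstrat V N) (r : 'I_N) :
  is_rob r -> optimal e gamma eps r psi ->
  forall s, noncap s -> ~~ is_rob (mover s) ->
  e (pos s (mover s)) (pos s (r0 hN)) -> psi (mover s) s = pos s (r0 hN).
Proof.
move=> Hr [_ Hopt] s Hnc Hn He.
have [_ H2] := Hopt s Hnc.
pose tau : 'I_N -> hstrat V N := fun k => of_pos (fun s' : State V N =>
  if allowed e (pos s' k) (pos s' (r0 hN)) then pos s' (r0 hN) else pos s' k).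
have Hleg : forall k, k != r -> legal_h e k (tau k).
  move=> k _ h s' _ _; rewrite /tau /of_pos.
  by case: ifP => // _; rewrite /allowed eqxx.
have Hrn : (mover s == r) = false.
  by apply/negbTE; apply: contra Hn => /eqP ->.
have Hr0n : (r0 hN == mover s) = false.
  by apply/negbTE; apply: contra Hn => /eqP H; rewrite -H is_robE.
have := H2 tau Hleg.
rewrite (@payoff_at V N _ gamma (upd tau r (of_pos (psi r))) s 1).
- rewrite weight_rob // /= Rmult_1_r.
  rewrite /payoff; case: excluded_middle_informative => [ex|nex]; last first.
    move=> H; exfalso; destruct hg; lra.
  case: ex_minnP => t Ht Hmin H.
  case: (psi (mover s) s =P pos s (r0 hN)) => // Hne.
  exfalso.
  have Ht2 : 2 <= t.
    clear H; case: t Ht {Hmin} => [|[|t]] Ht //.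
      by move: Hnc; rewrite /noncap; move: Ht => /= ->.
    move: Ht; rewrite state_at1 => Hc.
    suff : noncap (step s (of_pos (psi (mover s)) [::] s)) by rewrite /noncap Hc.
    apply: (noncapI (hN:=hN)) => i Hi.
    rewrite !pos_step Hr0n /=.
    case: ifP => _; first exact: Hne.
    exact: noncapP Hnc i Hi.
  rewrite weight_rob // in H.

  have : Rle (pow gamma t) (pow gamma 2).
    destruct hg; rewrite -(subnK Ht2) pow_add.
    rewrite -[X in Rle _ X]Rmult_1_l; apply: Rmult_le_compat_r.
      apply: pow_le; lra.
    rewrite -(pow1 (t - 2)); apply: pow_incr; lra.
  simpl pow in *; destruct hg; nra.
- rewrite state_at1; apply: (@capI _ _ hN _ (mover s)) => //.
  rewrite !pos_step eqxx Hr0n /upd Hrn /tau /of_pos.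
  by rewrite /allowed He orbT.
- case=> // _; exact: Hnc.
Qed.

Definition setf (V : finType) N (f : {ffun 'I_N -> V}) (j : 'I_N) (v : V) : {ffun 'I_N -> V} :=
  [ffun i => if i == j then v else f i].

Lemma setfE (V : finType) N (f : {ffun 'I_N -> V}) j v i :
  setf f j v i = if i == j then v else f i.
Proof. by rewrite ffunE. Qed.

Lemma noncap_mover (V : finType) N (f : {ffun 'I_N -> V}) (i k : 'I_N) :
  noncap ((f, i) : State V N) = noncap ((f, k) : State V N).
Proof. by []. Qed.

Lemma reach_step (V : finType) (e : rel V) N (s0 s : State V N) v :
  reachable e s0 s -> noncap s -> allowed e (pos s (mover s)) v -> reachable e s0 (step s v).
Proof.
move=> Hr Hnc Ha; apply: connect_trans Hr _; apply: connect1.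
rewrite /nc_move Hnc /=; apply/existsP; exists v; by rewrite Ha eqxx.
Qed.

Lemma iter_ordS N (i : 'I_N) d : val (iter d (@ordS N) i) = (i + d) %% N.
Proof.
elim: d => [|d IH] /=; first by rewrite addn0 modn_small.
by rewrite IH -addn1 modnDml -addnA addn1 addnS.
Qed.

Lemma reach_to (V : finType) (e : rel V) N (s0 : State V N) (f : {ffun 'I_N -> V}) (i : 'I_N) :
  reachable e s0 (f, i) -> noncap ((f, i) : State V N) -> forall k, reachable e s0 (f, k).
Proof.
move=> Hr Hnc k.
have Hd : forall d, reachable e s0 (f, iter d (@ordS N) i).
  elim=> [|d IH] //=.
  have -> : ((f, ordS (iter d (@ordS N) i)) : State V N) =
            step (f, iter d (@ordS N) i) (f (iter d (@ordS N) i)).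
    congr pair; apply/ffunP => j; rewrite ffunE /pos /=; by case: eqP => // ->.
  apply: reach_step => //; by rewrite /allowed eqxx.
have -> : k = iter (k + (N - i)) (@ordS N) i; last exact: Hd.
apply: val_inj; rewrite iter_ordS /= addnCA subnKC; last exact: ltnW (ltn_ord i).
by rewrite addnC modnDl modn_small.
Qed.

Lemma reach_move (V : finType) (e : rel V) N (s0 : State V N) (f : {ffun 'I_N -> V}) (i j : 'I_N) v :
  reachable e s0 (f, i) -> noncap ((f, i) : State V N) -> allowed e (f j) v ->
  reachable e s0 (setf f j v, ordS j).
Proof.
move=> Hr Hnc Ha.
have Hj := reach_to Hr Hnc j.
by apply: (reach_step Hj).
Qed.

Lemma walk (V : finType) (e : rel V) N (hN : 2 < N) (s0 : State V N) (i : 'I_N) :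
  ~~ is_rob i -> forall q (f : {ffun 'I_N -> V}) k,
  path e (f i) q -> all (fun v => v != f (r0 hN)) q ->
  reachable e s0 (f, k) -> noncap ((f, k) : State V N) ->
  exists k', reachable e s0 (setf f i (last (f i) q), k') /\
             noncap ((setf f i (last (f i) q), k') : State V N).
Proof.
move=> Hi; elim=> [|y q IH] f k /=.
  move=> _ _ Hr Hnc; exists k.
  have -> : setf f i (f i) = f by apply/ffunP => j; rewrite setfE; case: eqP => // ->.
  by [].
move=> /andP [Hey Hp] /andP [Hyb Hall] Hr Hnc.
have Hri : (r0 hN == i) = false by apply/negbTE; apply: contra Hi => /eqP H; rewrite -H is_robE.
have Hnc' : noncap ((setf f i y, ordS i) : State V N).
  apply: (noncapI (hN:=hN)) => j Hj; rewrite /pos /= !setfE Hri.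
  case: eqP => _; first by apply/eqP.
  have := noncapP (hN:=hN) Hnc Hj; rewrite /pos /=; exact.
have Hr' : reachable e s0 (setf f i y, ordS i).
  by apply: reach_move Hr Hnc _; rewrite /allowed Hey orbT.
have := IH (setf f i y) (ordS i).
rewrite !setfE eqxx Hri => /(_ Hp Hall Hr' Hnc') [k' [H1 H2]].
exists k'.
have E : setf (setf f i y) i (last y q) = setf f i (last y q).
  by apply/ffunP => j; rewrite !setfE; case: eqP.
by rewrite -E.
Qed.

Lemma path_to (V : finType) (e : rel V) (b : V) : forall p x,
  x != b -> path e x p -> last x p = b ->
  exists q, [/\ path e x q, all (fun v => v != b) q & e (last x q) b].
Proof.
elim=> [|y p IH] x /= Hx; first by move=> _ Hl; rewrite Hl eqxx in Hx.
move=> /andP [Hxy Hp] Hl.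
case: (eqVneq y b) => Hy.
  by exists [::]; split => //=; rewrite -Hy.
have [q [H1 H2 H3]] := IH y Hy Hp Hl.
by exists (y :: q); split => //=; rewrite ?Hxy ?Hy.
Qed.

Lemma near_b (V : finType) (e : rel V) (e_conn : forall x y : V, connect e x y) (b x : V) :
  x != b -> exists q, [/\ path e x q, all (fun v => v != b) q & e (last x q) b].
Proof.
move=> Hx; have /connectP [p Hp Hl] := e_conn x b.
exact: path_to Hx Hp (esym Hl).
Qed.

Lemma exit_set (V : finType) (e : rel V) (S : pred V) : forall p x,
  S x -> path e x p -> ~~ S (last x p) -> exists u v, [/\ S u, ~~ S v & e u v].
Proof.
elim=> [|y p IH] x /= Hx; first by move=> _ H; rewrite Hx in H.
move=> /andP [Hxy Hp] Hl.
case Hy: (S y); first exact: IH Hy Hp Hl.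
by exists x, y; rewrite Hx Hy Hxy.
Qed.

Lemma third (V : finType) (hV : 3 <= #|V|) (a b : V) : exists w, (w != a) && (w != b).
Proof.
case: (pickP (fun w => (w != a) && (w != b))) => [w Hw|H]; first by exists w.
have : #|V| <= #|[set a; b]|.
  apply: subset_leq_card; apply/subsetP => w _; rewrite !inE.
  by move: (H w); rewrite /= => /negbT; rewrite negb_and !negbK.
have := cards2 a b; have := leq_b1 (a != b).
move: hV; case: #|V| => [|[|[|n]]] //= _; case: (a != b) => //= _ -> //.
Qed.

Lemma weight_single (V : finType) N (hN : 2 < N) eps (m c : 'I_N) (s : State V N) :
  ~~ is_rob m -> ~~ is_rob c -> m != c -> pos s c = pos s (r0 hN) ->
  (forall i, ~~ is_rob i -> i != c -> pos s i <> pos s (r0 hN)) ->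
  weight eps m s = Rdiv eps (INR (N - 1 - 1)).
Proof.
move=> Hm Hc Hmc Hcp Hoth.
have Hrob : forall i, ~~ is_rob i -> i != c ->
    [exists j, is_rob j && (pos s i == pos s j)] = false.
  move=> i Hi Hic; apply/negbTE/existsPn => j; rewrite is_robE.
  case: eqP => //= ->; apply/eqP; exact: Hoth.
have HK : ncops_on_rob s = 1.
  rewrite /ncops_on_rob -(cards1 c); apply: eq_card => i; rewrite !inE.
  case: (eqVneq i c) => [->|Hic].
    rewrite Hc /=; apply/existsP; exists (r0 hN); by rewrite is_robE !eqxx Hcp eqxx.
  case Hi: (is_rob i) => //=; rewrite Hrob //; by rewrite Hi.
rewrite /weight (negbTE Hm) HK Hrob //.
have -> : (1 == N.-1) = false.
  apply/negbTE; have := hN; case: (N) => [|[|[|k]]] //.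
by [].
Qed.

Lemma core (V : finType) (e : rel V) N (hN : 2 < N) gamma eps
  (hg : Rlt R0 gamma /\ Rlt gamma R1) (heps : Rlt R0 eps) (s0 : State V N)
  (phi : 'I_N -> 'I_N -> pstrat V N)
  (Htc : trigger_choice e gamma eps phi) (Hpos : positional e gamma eps s0 phi)
  (s : State V N) (n m : 'I_N) (tau : 'I_N -> hstrat V N) (T : nat) :
  reachable e s0 s -> noncap s -> mover s = n -> ~~ is_rob n ->
  e (pos s n) (pos s (r0 hN)) -> ~~ is_rob m -> m != n ->
  (forall k, k != m -> legal_h e k (tau k)) -> 1 < T ->
  capture (state_at (upd tau m (of_pos (phi m m))) s T) ->
  (forall t, t < T -> ~~ capture (state_at (upd tau m (of_pos (phi m m))) s t)) ->
  weight eps m (state_at (upd tau m (of_pos (phi m m))) s T) = Rdiv eps (INR (N - 1 - 1)) ->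
  False.
Proof.
move=> Hre Hnc Hmv Hn He Hm Hmn Hleg HT Hcap Hfirst Hw.
have [sh [[r [Hr [psi [Hopt Hpsi]]]] Hag]] := Hpos n m.
have Hcr := cr_capture (hN:=hN) hg Hr Hopt Hnc.
rewrite Hmv in Hcr; have {Hcr} Hcr := Hcr Hn He.
have Hphi : phi m n s = pos s (r0 hN) by rewrite Hag // -Hpsi.
have [_ Hopt2] := Htc m.
have [_ H2] := Hopt2 s Hnc.
have := H2 tau Hleg.
rewrite (payoff_at _ _ Hcap Hfirst) Hw.
have Hr0n : (r0 hN == n) = false by apply/negbTE; apply: contra Hn => /eqP H; rewrite -H is_robE.
rewrite (@payoff_at V N _ gamma (fun k => of_pos (phi m k)) s 1).
- rewrite (@weight_single V N hN eps m n) //.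
  + have HX : Rlt R0 (Rdiv eps (INR (N - 1 - 1))).
      apply: Rdiv_lt_0_compat => //; apply: lt_0_INR; apply/ltP.
      by have := hN; case: (N) => [|[|[|k]]].
    have : Rle (pow gamma T) (pow gamma 2).
      destruct hg; rewrite -(subnK HT) pow_add.
      rewrite -[X in Rle _ X]Rmult_1_l; apply: Rmult_le_compat_r.
        apply: pow_le; lra.
      rewrite -(pow1 (T - 2)); apply: pow_incr; lra.
    move=> H1 H2'.
    have H3 : Rlt (pow gamma T) gamma.
      destruct hg; simpl pow in H1; nra.
    simpl pow in H2'; destruct hg.
    have : Rlt (Rmult (pow gamma T) (Rdiv eps (INR (N - 1 - 1))))
               (Rmult gamma (Rdiv eps (INR (N - 1 - 1)))).
      by apply: Rmult_lt_compat_r.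
    lra.
  + by rewrite state_at1 pos_step Hmv eqxx /of_pos Hphi pos_step Hmv Hr0n.
  + move=> i Hi Hin; rewrite state_at1 !pos_step Hmv (negbTE Hin) Hr0n.
    exact: (noncapP Hnc Hi).
- rewrite state_at1; apply: (@capI _ _ hN _ n) => //.
  by rewrite !pos_step Hmv eqxx Hr0n /of_pos Hphi.
- case=> // _; exact: Hnc.
Qed.

Lemma cN_lt N : 2 < N -> N.-2 < N.
Proof. by case: N => [|[|n]]. Qed.
Lemma c1_lt N : 2 < N -> 1 < N.
Proof. by case: N => [|[|n]]. Qed.
Lemma c0_lt N : 2 < N -> 0 < N.
Proof. by case: N => [|[|n]]. Qed.
Definition cN N (hN : 2 < N) : 'I_N := Ordinal (cN_lt hN).
Definition c0 N (hN : 2 < N) : 'I_N := Ordinal (c0_lt hN).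
Definition c1 N (hN : 2 < N) : 'I_N := Ordinal (c1_lt hN).

Lemma ordS_cN N (hN : 2 < N) : ordS (cN hN) = r0 hN.
Proof.
apply: val_inj => /=; have := hN; case: N hN => [|[|n]] //= _ _.
by rewrite modn_small.
Qed.

Lemma ordS_r0 N (hN : 2 < N) : ordS (r0 hN) = c0 hN.
Proof.
apply: val_inj => /=; have := hN; case: N hN => [|n] //= _ _.
by rewrite modnn.
Qed.

Lemma cN_cop N (hN : 2 < N) : ~~ is_rob (cN hN).
Proof. rewrite /is_rob /=; have := hN; case: N hN => [|[|[|n]]] //= _ _; by elim: n. Qed.
Lemma c0_cop N (hN : 2 < N) : ~~ is_rob (c0 hN).
Proof. rewrite /is_rob /=; have := hN; case: N hN => [|[|[|n]]] //=. Qed.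
Lemma c1_cop N (hN : 2 < N) : ~~ is_rob (c1 hN).
Proof. rewrite /is_rob /=; have := hN; case: N hN => [|[|[|n]]] //=. Qed.

Lemma stayE (V : finType) N (s : State V N) :
  step s (pos s (mover s)) = (s.1, ordS (mover s)).
Proof.
rewrite /step; congr pair; apply/ffunP => i; rewrite ffunE /pos.
by case: eqP => // ->.
Qed.

Lemma neq_rob N (hN : 2 < N) (i : 'I_N) : ~~ is_rob i -> (i == r0 hN) = false.
Proof. by move=> Hi; apply/negbTE; apply: contra Hi => /eqP ->; rewrite is_robE. Qed.

Lemma devT1 (V : finType) (e : rel V) (e_sym : symmetric e) N (hN : 2 < N) gamma eps
  (hg : Rlt R0 gamma /\ Rlt gamma R1) (heps : Rlt R0 eps) (s0 : State V N)
  (phi : 'I_N -> 'I_N -> pstrat V N)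
  (Htc : trigger_choice e gamma eps phi) (Hpos : positional e gamma eps s0 phi)
  (s : State V N) (m : 'I_N) :
  reachable e s0 s -> noncap s -> mover s = cN hN ->
  e (pos s (cN hN)) (pos s (r0 hN)) -> ~~ is_rob m -> m != cN hN ->
  (forall i, ~~ is_rob i -> i != cN hN -> pos s i != pos s (cN hN)) -> False.
Proof.
move=> Hre Hnc Hmv He Hm Hmn Halone.
set a := pos s (cN hN).
pose tau : 'I_N -> hstrat V N := fun k => of_pos (fun s' : State V N =>
  if (k == r0 hN) && allowed e (pos s' k) a then a else pos s' k).
have Hleg : forall k, k != m -> legal_h e k (tau k).
  move=> k _ h s' _ _; rewrite /tau /of_pos.
  by case: ifP => [/andP [] //|_]; rewrite /allowed eqxx.
set P := upd tau m (of_pos (phi m m)).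
have HcNr := neq_rob hN (cN_cop hN).
have Hrm : (r0 hN == m) = false.
  by apply/negbTE; apply: contra Hm => /eqP <-; rewrite is_robE.
have E1 : state_at P s 1 = (s.1, r0 hN).
  rewrite state_at1 Hmv /P /upd eq_sym (negbTE Hmn) /tau /of_pos HcNr /=.
  by rewrite -Hmv stayE Hmv ordS_cN.
have E2 : state_at P s 2 = step (s.1, r0 hN) a.
  rewrite state_atS E1 /P /upd /mover /= Hrm /tau /of_pos eqxx /=.
  by rewrite /allowed /pos /= e_sym He orbT.
have Hr0N : (r0 hN == cN hN) = false by rewrite eq_sym.
apply: (core hg heps Htc Hpos (s := s) (n := cN hN) (m := m) (tau := tau) (T := 2)) => //.
- exact: cN_cop.
- rewrite E2; apply: (@capI _ _ hN _ (cN hN)); first exact: cN_cop.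
  by rewrite !pos_step /mover /= HcNr eqxx.
- case=> [|[|t]] // _; rewrite -/P ?E1 //.
- rewrite E2; apply: (@weight_single V N hN eps m (cN hN)) => //; first exact: cN_cop.
    by rewrite !pos_step /mover /= HcNr eqxx.
  move=> i Hi Hin; rewrite !pos_step /mover /= eqxx (neq_rob hN Hi).
  exact/eqP/Halone.
Qed.

Lemma devT2 (V : finType) (e : rel V) N (hN : 2 < N) (hN4 : 3 < N) gamma eps
  (hg : Rlt R0 gamma /\ Rlt gamma R1) (heps : Rlt R0 eps) (s0 : State V N)
  (phi : 'I_N -> 'I_N -> pstrat V N)
  (Htc : trigger_choice e gamma eps phi) (Hpos : positional e gamma eps s0 phi)
  (s : State V N) :
  reachable e s0 s -> noncap s -> mover s = cN hN ->
  e (pos s (cN hN)) (pos s (r0 hN)) -> e (pos s (c0 hN)) (pos s (r0 hN)) -> False.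
Proof.
move=> Hre Hnc Hmv He He0.
pose tau : 'I_N -> hstrat V N := fun k => of_pos (fun s' : State V N =>
  if (k == c0 hN) && allowed e (pos s' k) (pos s' (r0 hN)) then pos s' (r0 hN) else pos s' k).
set m := c1 hN.
have Hleg : forall k, k != m -> legal_h e k (tau k).
  move=> k _ h s' _ _; rewrite /tau /of_pos.
  by case: ifP => [/andP [] //|_]; rewrite /allowed eqxx.
set P := upd tau m (of_pos (phi m m)).
have HcNr := neq_rob hN (cN_cop hN).
have Hc0r := neq_rob hN (c0_cop hN).
have Hrm : (r0 hN == m) = false by rewrite eq_sym neq_rob //; exact: c1_cop.
have HcNm : (cN hN == m) = false.
  by apply/negbTE; rewrite -val_eqE /=; move: hN4; case: (N) => [|[|[|[|n]]]].
have HcN0 : (cN hN == c0 hN) = false.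
  by apply/negbTE; rewrite -val_eqE /=; move: hN4; case: (N) => [|[|[|[|n]]]].
have Hc0m : (c0 hN == m) = false by [].
have Hr0c : (r0 hN == c0 hN) = false by rewrite eq_sym.
have E1 : state_at P s 1 = (s.1, r0 hN).
  rewrite state_at1 Hmv /P /upd HcNm /tau /of_pos HcN0 /=.
  by rewrite -Hmv stayE Hmv ordS_cN.
have E2 : state_at P s 2 = (s.1, c0 hN).
  rewrite state_atS E1 /P /upd /mover /= Hrm /tau /of_pos Hr0c /=.
  by rewrite -[r0 hN]/(mover (s.1, r0 hN)) stayE ordS_r0.
have E3 : state_at P s 3 = step (s.1, c0 hN) (pos s (r0 hN)).
  rewrite state_atS E2 /P /upd /mover /= ?Hc0m /tau /of_pos eqxx /=.
  by rewrite /allowed /pos /= He0 orbT.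
apply: (core hg heps Htc Hpos (s := s) (n := cN hN) (m := m) (tau := tau) (T := 3)) => //.
- exact: cN_cop.
- exact: c1_cop.
- by rewrite eq_sym HcNm.
- rewrite E3; apply: (@capI _ _ hN _ (c0 hN)); first exact: c0_cop.
  by rewrite !pos_step /mover /= Hr0c.
- case=> [|[|[|t]]] // _; rewrite -/P ?E1 ?E2 //.
- rewrite E3; apply: (@weight_single V N hN eps m (c0 hN)) => //; [exact: c1_cop|exact: c0_cop|..].
    by rewrite !pos_step /mover /= ?eqxx ?Hr0c.
  move=> i Hi Hin; rewrite !pos_step /mover /= (negbTE Hin) Hr0c.
  exact: (noncapP Hnc Hi).
Qed.

Lemma cops3 N (hN : 2 < N) (h3 : N = 3) (i : 'I_N) :
  ~~ is_rob i -> i = c0 hN \/ i = cN hN.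
Proof.
rewrite /is_rob => Hi.
have Hlt : val i < 3 by rewrite -h3 ltn_ord.
have E2 : N.-1 = 2 by rewrite h3.
have Hn2 : val i != 2 by move: Hi; rewrite E2.
have Hc0 : val (c0 hN) = 0 by [].
have HcN : val (cN hN) = 1 by rewrite /= h3.
case Ei: (val i) Hlt Hn2 => [|[|[|k]]] // _ _; [left|right]; apply: val_inj; by rewrite Ei ?Hc0 ?HcN.
Qed.

Unset Implicit Arguments.
Set Strict Implicit.

Theorem mainTheorem4 (V : finType) (e : rel V)
  (e_sym : symmetric e) (e_irr : irreflexive e)
  (e_conn : forall x y : V, connect e x y) (hV : 3 <= #|V|)
  (N : nat) (hN : 3 <= N) (eps : R)
  (heps : Rlt R0 eps /\ Rle eps (Rinv (INR (N - 1))))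
  (s0 : State V N) (hs0 : noncap s0) :
  forall gamma : R, Rlt R0 gamma /\ Rlt gamma R1 ->
  forall phi : 'I_N -> 'I_N -> pstrat V N,
    trigger_choice e gamma eps phi ->
    nonpositional e gamma eps s0 phi.
Proof.
move=> gamma hg phi Htc Hpos.
have heps0 := proj1 heps.
have Hr0 : reachable e s0 (s0.1, s0.2) by rewrite -surjective_pairing; exact: connect0.
set f0 := s0.1; set k0 := s0.2.
have Hnc0 : noncap ((f0, k0) : State V N) by rewrite /f0 /k0 -surjective_pairing.
set b := f0 (r0 hN).
have HcNr := neq_rob hN (cN_cop hN).
have Hc0r := neq_rob hN (c0_cop hN).
have HcN0 : (cN hN == c0 hN) = false.
  by apply/negbTE; rewrite -val_eqE /=; move: (hN); case: (N) => [|[|[|n]]].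
have H0cN : (c0 hN == cN hN) = false by rewrite eq_sym.
have HrcN : (r0 hN == cN hN) = false by rewrite eq_sym.
have Hrc0 : (r0 hN == c0 hN) = false by rewrite eq_sym.
have HfN : f0 (cN hN) != b by apply/eqP; exact: (noncapP (s := (f0, k0)) Hnc0 (cN_cop hN)).
have [q1 [Hq1 Hq1b Hq1e]] := near_b e_conn HfN.
case: (ltnP 3 N) => HN4.
-
  have Hf00 : f0 (c0 hN) != b by apply/eqP; exact: (noncapP (s := (f0, k0)) Hnc0 (c0_cop hN)).
  have [q0 [Hq0 Hq0b Hq0e]] := near_b e_conn Hf00.
  have [k1 [Hre1 Hnc1]] := walk (c0_cop hN) Hq0 Hq0b Hr0 Hnc0.
  set f1 := setf f0 (c0 hN) (last (f0 (c0 hN)) q0) in Hre1 Hnc1.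
  have Ef1r : f1 (r0 hN) = b by rewrite /f1 setfE eq_sym Hc0r.
  have Ef1N : f1 (cN hN) = f0 (cN hN) by rewrite /f1 setfE HcN0.
  have Hq1' : path e (f1 (cN hN)) q1 by rewrite Ef1N.
  have Hq1b' : all (fun v => v != f1 (r0 hN)) q1 by rewrite Ef1r.
  have [k2 [Hre2 Hnc2]] := walk (cN_cop hN) Hq1' Hq1b' Hre1 Hnc1.
  set f2 := setf f1 (cN hN) (last (f1 (cN hN)) q1) in Hre2 Hnc2.
  have Hre := reach_to Hre2 Hnc2 (cN hN).
  apply: (devT2 (hN:=hN) HN4 hg heps0 Htc Hpos Hre) => //.
  + by rewrite /pos /= /f2 /f1 !setfE ?eqxx ?HcN0 ?H0cN ?HrcN ?Hrc0.
  + by rewrite /pos /= /f2 /f1 !setfE ?eqxx ?HcN0 ?H0cN ?HrcN ?Hrc0.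
-
  have h3 : N = 3 by apply/eqP; rewrite eqn_leq HN4 hN.
  have [k1 [Hre1 Hnc1]] := walk (cN_cop hN) Hq1 Hq1b Hr0 Hnc0.
  move: Hq1e Hre1 Hnc1; set a := last (f0 (cN hN)) q1 => Hq1e Hre1 Hnc1.
  move: Hre1 Hnc1; set f1 := setf f0 (cN hN) a => Hre1 Hnc1.
  have Ef1r : f1 (r0 hN) = b by rewrite /f1 setfE HrcN.
  have Ef1N : f1 (cN hN) = a by rewrite /f1 setfE eqxx.
  have Hm : c0 hN != cN hN by rewrite H0cN.
  have Hab : a != b by apply/eqP => Eab; rewrite Eab e_irr in Hq1e.
  case: (eqVneq (f1 (c0 hN)) a) => Hca; last first.
    have Hre := reach_to Hre1 Hnc1 (cN hN).
    apply: (devT1 e_sym (hN:=hN) hg heps0 Htc Hpos Hre (m := c0 hN)) => //.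
    + by rewrite /pos /= Ef1N Ef1r.
    + exact: c0_cop.
    + move=> i Hi Hin; case: (cops3 hN h3 Hi) => Ei; last by rewrite Ei eqxx in Hin.
      by rewrite Ei /pos /= Ef1N.
  case: (pickP (fun c => e a c && (c != b))) => [c /andP [Hac Hcb]|Hnone].
    have Hal : allowed e (f1 (c0 hN)) c by rewrite Hca /allowed Hac orbT.
    have Hre2 := reach_move Hre1 Hnc1 Hal.
    move: Hre2; set f2 := setf f1 (c0 hN) c => Hre2.
    have Ef2r : f2 (r0 hN) = b by rewrite /f2 setfE Hrc0.
    have Ef2N : f2 (cN hN) = a by rewrite /f2 setfE HcN0.
    have Ef20 : f2 (c0 hN) = c by rewrite /f2 setfE eqxx.
    have Hnc2 : noncap ((f2, ordS (c0 hN)) : State V N).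
      apply: (noncapI (hN := hN)) => i Hi; rewrite /pos /= Ef2r.
      case: (cops3 hN h3 Hi) => ->; rewrite ?Ef2N ?Ef20; exact/eqP.
    have Hre := reach_to Hre2 Hnc2 (cN hN).
    apply: (devT1 e_sym (hN:=hN) hg heps0 Htc Hpos Hre (m := c0 hN)) => //.
    + by rewrite /pos /= Ef2N Ef2r.
    + exact: c0_cop.
    + move=> i Hi Hin; case: (cops3 hN h3 Hi) => Ei; last by rewrite Ei eqxx in Hin.
      rewrite Ei /pos /= Ef2N Ef20.
      by apply/eqP => Eca; rewrite Eca e_irr in Hac.
  (* a is pendant: the robber steps aside *)
  have [w Hw] := third hV a b.
  have /connectP [p Hp Hl] := e_conn a w.
  have HSa : [pred x | (x == a) || (x == b)] a by rewrite /= eqxx.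
  have HSw : ~~ [pred x | (x == a) || (x == b)] (last a p) by rewrite -Hl /= negb_or.
  have [u [v [Hu Hv Huv]]] := @exit_set V e [pred x | (x == a) || (x == b)] p a HSa Hp HSw.
  move: Hu Hv; rewrite /= negb_or => /orP [/eqP Eu|/eqP Eu] /andP [Hva Hvb].
    by move: (Hnone v); rewrite /= -Eu Huv Hvb.
  rewrite Eu in Huv.
  have Hal : allowed e (f1 (r0 hN)) v by rewrite Ef1r /allowed Huv orbT.
  have Hre2 := reach_move Hre1 Hnc1 Hal.
  move: Hre2; set f2 := setf f1 (r0 hN) v => Hre2.
  have Ef2N : f2 (cN hN) = a by rewrite /f2 setfE HcNr.
  have Ef20 : f2 (c0 hN) = a by rewrite /f2 setfE Hc0r.
  have Ef2r : f2 (r0 hN) = v by rewrite /f2 setfE eqxx.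
  have Hnc2 : noncap ((f2, ordS (r0 hN)) : State V N).
    apply: (noncapI (hN := hN)) => i Hi; rewrite /pos /= Ef2r.
    case: (cops3 hN h3 Hi) => ->; rewrite ?Ef2N ?Ef20; apply/eqP; by rewrite eq_sym.
  have Hal2 : allowed e (f2 (cN hN)) b by rewrite Ef2N /allowed Hq1e orbT.
  have Hre3 := reach_move Hre2 Hnc2 Hal2.
  move: Hre3; set f3 := setf f2 (cN hN) b => Hre3.
  have Ef3N : f3 (cN hN) = b by rewrite /f3 setfE eqxx.
  have Ef30 : f3 (c0 hN) = a by rewrite /f3 setfE H0cN.
  have Ef3r : f3 (r0 hN) = v by rewrite /f3 setfE HrcN.
  have Hnc3 : noncap ((f3, ordS (cN hN)) : State V N).
    apply: (noncapI (hN := hN)) => i Hi; rewrite /pos /= Ef3r.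
    case: (cops3 hN h3 Hi) => ->; rewrite ?Ef3N ?Ef30; apply/eqP; by rewrite eq_sym.
  have Hre := reach_to Hre3 Hnc3 (cN hN).
  apply: (devT1 e_sym (hN:=hN) hg heps0 Htc Hpos Hre (m := c0 hN)) => //.
  + by rewrite /pos /= Ef3N Ef3r.
  + exact: c0_cop.
  + move=> i Hi Hin; case: (cops3 hN h3 Hi) => Ei; last by rewrite Ei eqxx in Hin.
    by rewrite Ei /pos /= Ef3N Ef30.
Qed.
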